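(* Let $A,B \in M_n(\mathbb{R}_+)$ be two triangularizable matrices. If $G_A \subseteq G_B$ or $G_B \subseteq G_A$, then $A$ and $B$ are simultaneously triangularizable.
   Context: Max algebra: $\mathbb{R}_+$ the nonnegative reals with $a\oplus b=\max\{a,b\}$ and ordinary multiplication; for $A,B\in M_n(\mathbb{R}_+)$, $(AB)_{ij}=\max_k a_{ik}b_{kj}$. $GL_n(\mathbb{R}_+)$ is the set of matrices invertible under this product (the generalized permutation matrices). $A$ is triangularizable if $P^{-1}AP$ is upper triangular for some $P\in GL_n(\mathbb{R}_+)$; $A,B$ are simultaneously triangularizable if a single $P\in GL_n(\mathbb{R}_+)$ makes both $P^{-1}AP$ and $P^{-1}BP$ upper triangular. The digraph $G_A$ has vertices $\{1,\dots,n\}$ and an edge $i\to j$ iff $a_{ij}>0$; $G_A\subseteq G_B$ means every edge of $G_A$ is an edge of $G_B$. *)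

(* Defs.v *)
From HB Require Import structures.
From mathcomp Require Import all_boot all_order all_algebra.
From mathcomp Require Import reals.
Set Implicit Arguments. Unset Strict Implicit. Unset Printing Implicit Defensive.
Import Order.TTheory GRing.Theory Num.Theory.
Local Open Scope ring_scope.

Section MaxAlgebra.
Variables (R : realType) (n : nat).

Definition nonneg_mx (A : 'M[R]_n) : Prop := forall i j, 0 <= A i j.

(* Max-algebra product: (A (x) B)_ij = max_k a_ik b_kj  (0 is the max-unit on R_+). *)
Definition maxmul (A B : 'M[R]_n) : 'M[R]_n :=
  \matrix_(i, j) \big[Num.max/0]_(k < n) (A i k * B k j).

Definition maxid : 'M[R]_n := 1%:M.

Definition max_inverse (P Q : 'M[R]_n) : Prop :=
  [/\ nonneg_mx P, nonneg_mx Q, maxmul P Q = maxid & maxmul Q P = maxid].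

Definition max_GL (P : 'M[R]_n) : Prop := exists Q, max_inverse P Q.

Definition upper_triangular (A : 'M[R]_n) : Prop :=
  forall i j : 'I_n, (j < i)%N -> A i j = 0.

Definition max_triangularizable (A : 'M[R]_n) : Prop :=
  exists P Q, max_inverse P Q /\ upper_triangular (maxmul (maxmul Q A) P).

Definition simult_triangularizable (A B : 'M[R]_n) : Prop :=
  exists P Q, max_inverse P Q /\
    upper_triangular (maxmul (maxmul Q A) P) /\
    upper_triangular (maxmul (maxmul Q B) P).

(* G_A subset G_B : every edge i -> j of G_A (a_ij > 0) is an edge of G_B. *)
Definition digraph_sub (A B : 'M[R]_n) : Prop :=
  forall i j, 0 < A i j -> 0 < B i j.

End MaxAlgebra.

(* Main.v *)
Require Import Defs.
From HB Require Import structures.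
From mathcomp Require Import all_boot all_order all_algebra.
From mathcomp Require Import reals.
Set Implicit Arguments. Unset Strict Implicit. Unset Printing Implicit Defensive.
Import Order.TTheory GRing.Theory Num.Theory.
Local Open Scope ring_scope.

Lemma bigmax_ge_seq (R : realType) (I : eqType) (s : seq I) (F : I -> R) x :
  x \in s -> F x <= \big[Num.max/0]_(i <- s) F i.
Proof.
elim: s => [|a s IH] //; rewrite in_cons big_cons => /orP [/eqP ->|/IH h].
  by rewrite le_max lexx.
by rewrite le_max h orbT.
Qed.

Lemma bigmax_ge (R : realType) (n : nat) (F : 'I_n -> R) k :
  F k <= \big[Num.max/0]_(i < n) F i.
Proof. by apply: bigmax_ge_seq; rewrite mem_index_enum. Qed.

Lemma bigmax_nonneg (R : realType) (n : nat) (F : 'I_n -> R) :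
  (forall k, 0 <= F k) -> 0 <= \big[Num.max/0]_(i < n) F i.
Proof.
move=> H; apply: (big_ind (fun x => 0 <= x)) => //.
by move=> x y hx hy; rewrite le_max hx.
Qed.

Lemma bigmax_le0 (R : realType) (n : nat) (F : 'I_n -> R) :
  (forall k, F k <= 0) -> \big[Num.max/0]_(i < n) F i <= 0.
Proof.
move=> H; apply: (big_ind (fun x => x <= 0)) => //.
by move=> x y hx hy; rewrite ge_max hx.
Qed.

Lemma key (R : realType) (n : nat) (A B P Q : 'M[R]_n) i j :
  nonneg_mx A -> nonneg_mx P -> nonneg_mx Q -> digraph_sub A B ->
  maxmul (maxmul Q B) P i j = 0 -> maxmul (maxmul Q A) P i j = 0.
Proof.
move=> nA nP nQ sub; rewrite /maxmul !mxE => HB.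
apply/eqP; rewrite eq_le; apply/andP; split; last first.
  apply: bigmax_nonneg => l; rewrite mxE; apply: mulr_ge0 => //.
  by apply: bigmax_nonneg => k; apply: mulr_ge0.
apply: bigmax_le0 => l; rewrite mxE.
have [Pz|Pp] := eqVneq (P l j) 0; first by rewrite Pz mulr0.
have Ppos : 0 < P l j by rewrite lt_def Pp nP.
rewrite pmulr_lle0 //; apply: bigmax_le0 => k.
have [Qz|Qp] := eqVneq (Q i k) 0; first by rewrite Qz mul0r.
have [Az|Ap] := eqVneq (A k l) 0; first by rewrite Az mulr0.
have Qpos : 0 < Q i k by rewrite lt_def Qp nQ.
have Apos : 0 < A k l by rewrite lt_def Ap nA.
have Bpos := sub _ _ Apos.
have h1 : Q i k * B k l <= \big[Num.max/0]_(k0 < n) (Q i k0 * B k0 l)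
  := bigmax_ge (fun k0 => Q i k0 * B k0 l) k.
have h2 := bigmax_ge (fun l0 => (\matrix_(i0, j0) \big[Num.max/0]_(k0 < n)
   (Q i0 k0 * B k0 j0)) i l0 * P l0 j) l.
rewrite HB mxE in h2.
have : 0 < Q i k * B k l * P l j by rewrite !mulr_gt0.
move=> h3; exfalso.
have : Q i k * B k l * P l j <= 0.
  apply: le_trans h2; apply: ler_wpM2r; first exact: nP.
  exact: h1.
by rewrite leNgt h3.
Qed.

Theorem corollary3p4 (R : realType) (n : nat) (A B : 'M[R]_n) :
  nonneg_mx A -> nonneg_mx B ->
  max_triangularizable A -> max_triangularizable B ->
  digraph_sub A B \/ digraph_sub B A ->
  simult_triangularizable A B.
Proof.
move=> nA nB [PA [QA [iA tA]]] [PB [QB [iB tB]]] [s|s].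
  exists PB, QB; split => //; split => // a b hab.
  case: iB => nP nQ _ _; exact: (key nA nP nQ s (tB a b hab)).
exists PA, QA; split => //; split => // a b hab.
case: iA => nP nQ _ _; exact: (key nB nP nQ s (tA a b hab)).
Qed.
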